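(* For all real numbers $a\le b$, the closed interval $[a,b]$ contains only finitely many cutoffs.
   Context: For a real number $\alpha\ge 1$, define the integer sequence $(P^\alpha_i)_{i\ge 0}$ by $P^\alpha_0=0$, $P^\alpha_1=1$, and for $k\ge 1$, $P^\alpha_{k+1}=P^\alpha_k+P^\alpha_j$, where $j\ge1$ is the unique index with $\alpha P^\alpha_{j-1}<P^\alpha_k\le \alpha P^\alpha_j$. A cutoff is a real number $\alpha\ge 1$ such that for every real $\beta$ with $1\le\beta<\alpha$, the sequences $(P^\alpha_i)$ and $(P^\beta_i)$ are not identical. *)

(* Defs.v *)
From Stdlib Require Import Reals Lra Lia List.
Import ListNotations.
Open Scope R_scope.

(* Condition defining the index j used at step k:
   alpha * P_(j-1) < P_k <= alpha * P_j, where l = [P_0; ...; P_k]. *)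
Definition jcond (alpha : R) (l : list nat) (pk j : nat) : bool :=
  match j with
  | O => false
  | S j' =>
      if Rlt_dec (alpha * INR (nth j' l 0%nat)) (INR pk) then
        if Rle_dec (INR pk) (alpha * INR (nth j l 0%nat)) then true else false
      else false
  end.

(* Search the (unique) j in [j, j + fuel) satisfying jcond; 0 if none
   (the paper shows such a j exists and is unique, with 1 <= j <= k). *)
Fixpoint search_j (alpha : R) (l : list nat) (pk j fuel : nat) : nat :=
  match fuel with
  | O => O
  | S f => if jcond alpha l pk j then j else search_j alpha l pk (S j) f
  end.

(* Plist alpha n = [P^alpha_0; ...; P^alpha_n]. *)
Fixpoint Plist (alpha : R) (n : nat) : list nat :=
  match n with
  | O => [0%nat]
  | S m =>
      let l := Plist alpha m in
      match m with
      | O => l ++ [1%nat]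
      | S _ =>
          let pk := last l 0%nat in
          let j := search_j alpha l pk 1 (length l) in
          l ++ [(pk + nth j l 0%nat)%nat]
      end
  end.

Definition P (alpha : R) (i : nat) : nat := nth i (Plist alpha i) 0%nat.

Definition cutoff (alpha : R) : Prop :=
  1 <= alpha /\
  forall beta : R, 1 <= beta < alpha -> ~ (forall i : nat, P alpha i = P beta i).

(* Main.v *)
Require Import Defs.
From Stdlib Require Import Reals Lra Lia List Classical.
Import ListNotations.
Open Scope R_scope.

Fixpoint srch (t : nat -> bool) (j fuel : nat) : nat :=
  match fuel with O => O | S f => if t j then j else srch t (S j) f end.

Lemma search_j_srch : forall alpha l pk fuel j,
  search_j alpha l pk j fuel = srch (jcond alpha l pk) j fuel.
Proof. intros alpha l pk fuel; induction fuel; intros j; simpl; auto.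
  rewrite IHfuel; auto. Qed.

Lemma srch_spec : forall t fuel j i, (j <= i < j + fuel)%nat -> t i = true ->
  (j <= srch t j fuel <= i)%nat /\ t (srch t j fuel) = true /\
  (forall i', (j <= i' < srch t j fuel)%nat -> t i' = false).
Proof. intros t fuel; induction fuel; intros j i Hi Ht; simpl. lia.
  destruct (t j) eqn:E. split; [lia|split; auto]. intros; lia.
  assert (i <> j) by (intro; subst; congruence).
  destruct (IHfuel (S j) i) as [A [B C]]; try lia; auto.
  split; [lia|split; auto]. intros i' Hi'. destruct (Nat.eq_dec i' j). subst; auto.
  apply C; lia. Qed.

Lemma srch_eq : forall t fuel j j0, (j <= j0 < j + fuel)%nat -> t j0 = true ->
  (forall i, (j <= i < j0)%nat -> t i = false) -> srch t j fuel = j0.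
Proof. intros t fuel; induction fuel; intros j j0 H1 H2 H3; simpl. lia.
  destruct (t j) eqn:E. destruct (Nat.eq_dec j j0); auto. rewrite H3 in E; [discriminate|lia].
  destruct (Nat.eq_dec j j0). subst; congruence. apply IHfuel; auto; try lia.
  intros; apply H3; lia. Qed.

Definition ctest (s:bool) (alpha:R) (pk pj:nat) : bool :=
  if s then (if Rlt_dec (INR pk) (alpha * INR pj) then true else false)
  else (if Rle_dec (INR pk) (alpha * INR pj) then true else false).

Definition cP (s:bool) (alpha:R) (pk pj:nat) : Prop :=
  if s then INR pk < alpha * INR pj else INR pk <= alpha * INR pj.

Lemma ctest_iff : forall s alpha pk pj, ctest s alpha pk pj = true <-> cP s alpha pk pj.
Proof. intros [|] alpha pk pj; unfold ctest, cP;
  [destruct (Rlt_dec _ _)|destruct (Rle_dec _ _)]; split; intros; auto; try discriminate; contradiction. Qed.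

Lemma ctest_false : forall s alpha pk pj, ctest s alpha pk pj = false <-> ~ cP s alpha pk pj.
Proof. intros. rewrite <- ctest_iff. destruct (ctest s alpha pk pj); split; intros; congruence. Qed.

Fixpoint gl (s:bool) (alpha:R) (n:nat) : list nat :=
  match n with
  | O => [0%nat]
  | S m => let l := gl s alpha m in
     match m with
     | O => l ++ [1%nat]
     | S _ => let pk := last l 0%nat in
              let j := srch (fun j => ctest s alpha pk (nth j l 0%nat)) 1 (length l) in
              l ++ [(pk + nth j l 0)%nat]
     end
  end.

Definition Sq s alpha k := nth k (gl s alpha k) 0%nat.
Definition Jf s alpha k := srch (fun j => ctest s alpha (Sq s alpha k) (nth j (gl s alpha k) 0%nat)) 1 (S k).

Lemma gl_len : forall s a n, length (gl s a n) = S n.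
Proof. intros s a n; induction n; simpl; auto. destruct n; rewrite length_app, IHn; simpl; lia. Qed.

Lemma gl_app : forall s a n, exists x, gl s a (S n) = gl s a n ++ [x].
Proof. intros. simpl. destruct n; eauto. Qed.

Lemma gl_nth : forall s a n i, (i <= n)%nat -> nth i (gl s a n) 0%nat = Sq s a i.
Proof. intros s a n; induction n; intros i Hi. replace i with 0%nat by lia; reflexivity.
  destruct (Nat.eq_dec i (S n)). subst; reflexivity.
  destruct (gl_app s a n) as [x Hx]. rewrite Hx, app_nth1. apply IHn; lia.
  rewrite gl_len; lia. Qed.

Lemma gl_last : forall s a n, last (gl s a n) 0%nat = Sq s a n.
Proof. intros s a [|n]. reflexivity. unfold Sq. destruct (gl_app s a n) as [x Hx]. rewrite Hx, last_last.
  rewrite app_nth2; rewrite gl_len; [|lia]. replace (S n - S n)%nat with 0%nat by lia. reflexivity. Qed.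

Lemma Sq0 : forall s a, Sq s a 0 = 0%nat. Proof. reflexivity. Qed.
Lemma Sq1 : forall s a, Sq s a 1 = 1%nat. Proof. reflexivity. Qed.

Lemma Sq_step0 : forall s a k, (1 <= k)%nat ->
  Sq s a (S k) = (Sq s a k + nth (Jf s a k) (gl s a k) 0)%nat.
Proof. intros s a k Hk. destruct k as [|k]. lia.
  unfold Sq at 1. unfold Jf.
  change (gl s a (S (S k))) with (let l := gl s a (S k) in
     let pk := last l 0%nat in
              let j := srch (fun j => ctest s a pk (nth j l 0%nat)) 1 (length l) in
              l ++ [(pk + nth j l 0)%nat]). cbv zeta.
  rewrite gl_last, gl_len. rewrite app_nth2; rewrite gl_len; [|lia].
  replace (S (S k) - S (S k))%nat with 0%nat by lia. reflexivity. Qed.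

Section Gen.
Variable s : bool.
Variable a : R.
Hypothesis Ha : 1 <= a.
Hypothesis Hs : s = true -> 1 < a.

Notation Sq := (Sq s a).
Notation J := (Jf s a).

Lemma cP_self : forall p, (1 <= p)%nat -> cP s a p p.
Proof. intros p Hp. apply le_INR in Hp. simpl in Hp. unfold cP. destruct s eqn:E.
  specialize (Hs eq_refl). nra. nra. Qed.

Lemma Sq_mono1_pos : forall k, (Sq k <= Sq (S k))%nat /\ ((1 <= k)%nat -> (1 <= Sq k)%nat).
Proof. induction k. split. rewrite Sq0, Sq1; lia. lia.
  destruct IHk as [H1 H2]. split.
  rewrite (Sq_step0 _ _ (S k)); lia.
  intros _. destruct k. rewrite Sq1; lia. specialize (H2 ltac:(lia)). lia. Qed.

Lemma Sq_mono1 : forall k, (Sq k <= Sq (S k))%nat. Proof. apply Sq_mono1_pos. Qed.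
Lemma Sq_pos : forall k, (1 <= k)%nat -> (1 <= Sq k)%nat. Proof. intros; apply Sq_mono1_pos; auto. Qed.
Lemma Sq_mono : forall m n, (m <= n)%nat -> (Sq m <= Sq n)%nat.
Proof. intros m n H; induction H; auto. pose proof (Sq_mono1 m0); lia. Qed.

Lemma J_spec : forall k, (1 <= k)%nat ->
  (1 <= J k <= k)%nat /\ cP s a (Sq k) (Sq (J k)) /\
  (forall i, (1 <= i < J k)%nat -> ~ cP s a (Sq k) (Sq i)) /\
  Sq (S k) = (Sq k + Sq (J k))%nat.
Proof. intros k Hk.
  destruct (srch_spec (fun j => ctest s a (Sq k) (nth j (gl s a k) 0%nat)) (S k) 1 k) as [A [B C]].
  lia. rewrite gl_nth by lia. apply ctest_iff, cP_self, Sq_pos; auto.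
  fold (J k) in A, B, C. rewrite gl_nth in B by lia.
  split; [lia|]. split. apply ctest_iff; auto. split.
  intros i Hi. apply ctest_false. specialize (C i Hi). rewrite gl_nth in C by lia. auto.
  rewrite Sq_step0 by auto. rewrite gl_nth by lia. reflexivity. Qed.


Lemma cP_le : forall pk pj, cP s a pk pj -> INR pk <= a * INR pj.
Proof. unfold cP; destruct s; intros; lra. Qed.

Lemma cP_anti : forall pk pk' pj, cP s a pk pj -> (pk' <= pk)%nat -> cP s a pk' pj.
Proof. unfold cP; intros pk pk' pj H1 H2. apply le_INR in H2. destruct s; lra. Qed.

Lemma cP_add : forall pk pj pk' pj', cP s a pk pj -> cP s a pk' pj' -> cP s a (pk+pk') (pj+pj').
Proof. unfold cP; intros. rewrite !plus_INR. destruct s; lra. Qed.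

Lemma not_cP : forall pk pj, ~ cP s a pk pj ->
  if s then a * INR pj <= INR pk else a * INR pj < INR pk.
Proof. unfold cP; intros. destruct s; lra. Qed.

Lemma J_mono : forall k, (1 <= k)%nat -> (J k <= J (S k))%nat.
Proof. intros k Hk. destruct (J_spec k Hk) as [A [B [C D]]].
  destruct (J_spec (S k) ltac:(lia)) as [A' [B' [C' D']]].
  destruct (Compare_dec.le_lt_dec (J k) (J (S k))); auto. exfalso.
  apply (C (J (S k))). lia. apply cP_anti with (Sq (S k)); auto. apply Sq_mono1. Qed.

Lemma J_step : forall k, (1 <= k)%nat -> (J (S k) <= S (J k))%nat.
Proof. intros k Hk. destruct (J_spec k Hk) as [A [B [C D]]].
  destruct (J_spec (J k) ltac:(lia)) as [A2 [B2 [C2 D2]]].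
  destruct (J_spec (S k) ltac:(lia)) as [A' [B' [C' D']]].
  destruct (Compare_dec.le_lt_dec (J (S k)) (S (J k))); auto. exfalso.
  apply (C' (S (J k))). lia. rewrite D, D2. apply cP_add; auto. Qed.

Lemma growth : forall j n, (1 <= j)%nat -> (a + INR n) * INR (Sq j) <= a * INR (Sq (j + n)).
Proof. intros j n Hj. induction n. rewrite Nat.add_0_r. simpl. lra.
  replace (j + S n)%nat with (S (j + n)) by lia.
  destruct (J_spec (j+n) ltac:(lia)) as [A [B [C D]]]. rewrite D, plus_INR.
  apply cP_le in B. pose proof (Sq_mono j (j+n) ltac:(lia)) as M. apply le_INR in M.
  rewrite S_INR. nra. Qed.

Lemma lag_bound : forall k, (1 <= k)%nat -> INR (k - J k) <= a * a.
Proof. intros k Hk. destruct (J_spec k Hk) as [A [B [C D]]].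
  pose proof (growth (J k) (k - J k) ltac:(lia)) as G.
  replace (J k + (k - J k))%nat with k in G by lia.
  apply cP_le in B. pose proof (Sq_pos (J k) ltac:(lia)) as P. apply le_INR in P. simpl in P.
  assert (a + INR (k - J k) <= a * a). 
  { apply Rmult_le_reg_r with (INR (Sq (J k))). lra. nra. }
  lra. Qed.

End Gen.

Lemma ev_const : forall (f : nat -> nat) (B : nat),
  (forall k, (1 <= k)%nat -> (f k <= f (S k))%nat) ->
  (forall k, (1 <= k)%nat -> (f k <= B)%nat) ->
  exists K, (1 <= K)%nat /\ forall k, (K <= k)%nat -> f k = f K.
Proof. intros f B Hm Hb.
  assert (Mono : forall k0 k, (1 <= k0)%nat -> (k0 <= k)%nat -> (f k0 <= f k)%nat).
  { intros k0 k H1 H2. induction H2; auto. specialize (Hm m ltac:(lia)). lia. }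
  assert (forall n k0, (1 <= k0)%nat -> (B - f k0 <= n)%nat ->
     exists K, (1 <= K)%nat /\ forall k, (K <= k)%nat -> f k = f K).
  { induction n; intros k0 H1 H2.
    - exists k0. split; auto. intros k Hk. specialize (Mono k0 k H1 Hk). pose proof (Hb k ltac:(lia)).
      pose proof (Hb k0 H1). lia.
    - destruct (classic (exists k, (k0 <= k)%nat /\ f k <> f k0)) as [[k [Hk1 Hk2]]|Hn].
      + apply (IHn k). lia. specialize (Mono k0 k H1 Hk1). pose proof (Hb k ltac:(lia)). lia.
      + exists k0. split; auto. intros k Hk. destruct (Nat.eq_dec (f k) (f k0)); auto.
        exfalso; apply Hn; eauto. }
  apply (H B 1%nat); lia. Qed.

Lemma ratio : forall (x y : nat -> R) (d N : nat) (m : R),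
  (forall k, (N + d <= k)%nat -> x (S k) = x k + x (k - d)%nat /\ y (S k) = y k + y (k - d)%nat) ->
  (forall i, (N <= i <= N + d)%nat -> m * y i <= x i) ->
  forall k, (N <= k)%nat -> m * y k <= x k.
Proof. intros x y d N m Hr Hw.
  assert (forall n k, (k <= n)%nat -> (N <= k)%nat -> m * y k <= x k).
  { induction n; intros k H1 H2.
    - apply Hw; lia.
    - destruct (Compare_dec.le_lt_dec k (N + d)). apply Hw; lia.
      destruct k as [|k]. lia. destruct (Hr k ltac:(lia)) as [E1 E2]. rewrite E1, E2.
      pose proof (IHn k ltac:(lia) ltac:(lia)). pose proof (IHn (k - d)%nat ltac:(lia) ltac:(lia)). lra. }
  intros k Hk; apply (H k); auto. Qed.

Lemma fin_min : forall (G : nat -> R -> Prop),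
  (forall k e e', 0 < e' <= e -> G k e -> G k e') ->
  forall lo n, (forall k, (lo <= k < lo + n)%nat -> exists e, 0 < e /\ G k e) ->
  exists e, 0 < e /\ forall k, (lo <= k < lo + n)%nat -> G k e.
Proof. intros G HG lo n; induction n; intros H.
  - exists 1; split; [lra|]. intros; lia.
  - destruct IHn as [e1 [He1 G1]]. intros; apply H; lia.
    destruct (H (lo + n)%nat ltac:(lia)) as [e2 [He2 G2]].
    exists (Rmin e1 e2). split. apply Rmin_pos; auto.
    intros k Hk. destruct (Nat.eq_dec k (lo + n)). subst. apply HG with e2; auto.
    split. apply Rmin_pos; auto. apply Rmin_r.
    apply HG with e1; auto. split. apply Rmin_pos; auto. apply Rmin_l. apply G1; lia. Qed.

Lemma eventual : forall (x y : nat -> R) (d N : nat),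
  (forall k, (N + d <= k)%nat -> x (S k) = x k + x (k - d)%nat /\ y (S k) = y k + y (k - d)%nat) ->
  (forall i, (N <= i)%nat -> 0 < x i /\ 0 < y i) ->
  exists m, 0 < m /\ forall k, (N <= k)%nat -> m * y k <= x k.
Proof. intros x y d N Hr Hp.
  destruct (fin_min (fun k e => (N <= k)%nat -> e * y k <= x k)) with (lo := N) (n := S d) as [m [Hm G]].
  - intros k e e' [H1 H2] H3 H4. destruct (Hp k H4). specialize (H3 H4). nra.
  - intros k Hk. destruct (Hp k ltac:(lia)). exists (x k / y k). split.
    unfold Rdiv; apply Rmult_lt_0_compat; [auto|apply Rinv_0_lt_compat; auto]. intros _. right; field; lra.
  - exists m; split; auto. apply (ratio x y d N m); auto. intros i Hi; apply G; lia.
Qed.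

Section Gap.
Variable s : bool.
Variable a : R.
Hypothesis Ha : 1 <= a.
Hypothesis Hs : s = true -> 1 < a.

Notation J := (Jf s a).

Lemma lag_const : exists K d, (1 <= K)%nat /\ forall k, (K <= k)%nat -> (J k + d = k)%nat.
Proof. destruct (INR_unbounded (a * a)) as [B HB].
  destruct (ev_const (fun k => (k - J k)%nat) B) as [K [HK1 HK2]].
  - intros k Hk. pose proof (J_step s a Ha Hs k Hk). destruct (J_spec s a Ha Hs k Hk) as [A _]. lia.
  - intros k Hk. pose proof (lag_bound s a Ha Hs k Hk). assert (INR (k - J k) < INR B) by lra.
    apply INR_lt in H0. lia.
  - exists K, (K - J K)%nat. split; auto. intros k Hk. specialize (HK2 k Hk).
    destruct (J_spec s a Ha Hs k ltac:(lia)) as [A _].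
    destruct (J_spec s a Ha Hs K ltac:(lia)) as [A' _]. simpl in HK2. lia. Qed.

Definition Gap k e := if s then INR (Sq s a k) <= (a - e) * INR (Sq s a (J k))
  else (a + e) * INR (Sq s a (J k - 1)) <= INR (Sq s a k).

Lemma Gap_mono : forall k e e', 0 < e' <= e -> Gap k e -> Gap k e'.
Proof. intros k e e' H1 H2. unfold Gap in *.
  pose proof (pos_INR (Sq s a (J k))). pose proof (pos_INR (Sq s a (J k - 1))). destruct s; nra. Qed.

Lemma gap_early : forall k, (1 <= k)%nat -> exists e, 0 < e /\ Gap k e.
Proof. intros k Hk. destruct (J_spec s a Ha Hs k Hk) as [A [B [C D]]]. unfold Gap.
  pose proof (Sq_pos s a k Hk) as Pk. apply le_INR in Pk. simpl in Pk.
  pose proof (Sq_pos s a (J k) ltac:(lia)) as Pj. apply le_INR in Pj. simpl in Pj.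
  destruct (Nat.eq_dec (J k) 1) as [E|E].
  - destruct s eqn:Es.
    + unfold cP in B; cbv beta iota in B.
      exists ((a * INR (Sq true a (Jf true a k)) - INR (Sq true a k)) / INR (Sq true a (Jf true a k))). split.
      unfold Rdiv; apply Rmult_lt_0_compat; [lra|apply Rinv_0_lt_compat; lra].
      right. field. lra.
    + exists 1. split. lra. rewrite E. simpl (1-1)%nat. rewrite Sq0. simpl. lra.
  - assert (NC := C (J k - 1)%nat ltac:(lia)). apply (not_cP s a Hs) in NC.
    pose proof (Sq_pos s a (J k - 1) ltac:(lia)) as Pj'. apply le_INR in Pj'. simpl in Pj'.
    destruct s eqn:Es.
    + unfold cP in B; cbv beta iota in B.
      exists ((a * INR (Sq true a (Jf true a k)) - INR (Sq true a k)) / INR (Sq true a (Jf true a k))). split.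
      unfold Rdiv; apply Rmult_lt_0_compat; [lra|apply Rinv_0_lt_compat; lra].
      right. field. lra.
    + cbv beta iota in NC. exists ((INR (Sq false a k) - a * INR (Sq false a (Jf false a k - 1))) / INR (Sq false a (Jf false a k - 1))). split.
      unfold Rdiv; apply Rmult_lt_0_compat; [lra|apply Rinv_0_lt_compat; lra].
      right. field. lra. Qed.

End Gap.

Lemma gap_late_false : forall a, 1 <= a -> exists N, (1 <= N)%nat /\ exists e, 0 < e /\
  forall k, (N <= k)%nat -> (a + e) * INR (Sq false a (Jf false a k - 1)) <= INR (Sq false a k).
Proof. intros a Ha. assert (Hs : false = true -> 1 < a) by discriminate.
  destruct (lag_const false a Ha Hs) as [K [d [HK HJ]]].
  assert (Rec: forall k, (K <= k)%nat -> Sq false a (S k) = (Sq false a k + Sq false a (k - d))%nat).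
  { intros k Hk. destruct (J_spec false a Ha Hs k ltac:(lia)) as [_ [_ [_ D]]]. rewrite D.
    specialize (HJ k Hk). replace (k - d)%nat with (Jf false a k) by lia. reflexivity. }
  set (x := fun k => INR (Sq false a k) - a * INR (Sq false a (k - d - 1))).
  set (y := fun k => INR (Sq false a (k - d - 1))).
  destruct (eventual x y d (K + d + 1)) as [m [Hm Hmk]].
  - intros k Hk. unfold x, y.
    pose proof (Rec k ltac:(lia)) as E1.
    pose proof (Rec (k - d - 1)%nat ltac:(lia)) as E2.
    replace (S (k - d - 1)) with (k - d)%nat in E2 by lia.
    pose proof (Rec (k - d)%nat ltac:(lia)) as E3.
    replace (S k - d - 1)%nat with (k - d)%nat by lia.
    replace (k - d - d - 1)%nat with (k - d - 1 - d)%nat by lia.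
    rewrite E1, E2, !plus_INR. split; ring.
  - intros i Hi. unfold x, y. specialize (HJ i ltac:(lia)).
    destruct (J_spec false a Ha Hs i ltac:(lia)) as [A [B [C D]]].
    assert (NC := C (Jf false a i - 1)%nat ltac:(lia)). apply (not_cP false a Hs) in NC.
    cbv beta iota in NC. replace (Jf false a i - 1)%nat with (i - d - 1)%nat in NC by lia.
    pose proof (Sq_pos false a (i - d - 1) ltac:(lia)) as P. apply le_INR in P. simpl in P.
    split; lra.
  - exists (K + d + 1)%nat. split. lia. exists m. split; auto. intros k Hk.
    specialize (Hmk k Hk). unfold x, y in Hmk. specialize (HJ k ltac:(lia)).
    replace (Jf false a k - 1)%nat with (k - d - 1)%nat by lia. lra. Qed.

Lemma gap_late_true : forall a, 1 < a -> exists N, (1 <= N)%nat /\ exists e, 0 < e /\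
  forall k, (N <= k)%nat -> INR (Sq true a k) <= (a - e) * INR (Sq true a (Jf true a k)).
Proof. intros a Ha'. assert (Ha : 1 <= a) by lra. assert (Hs : true = true -> 1 < a) by auto.
  destruct (lag_const true a Ha Hs) as [K [d [HK HJ]]].
  assert (Rec: forall k, (K <= k)%nat -> Sq true a (S k) = (Sq true a k + Sq true a (k - d))%nat).
  { intros k Hk. destruct (J_spec true a Ha Hs k ltac:(lia)) as [_ [_ [_ D]]]. rewrite D.
    specialize (HJ k Hk). replace (k - d)%nat with (Jf true a k) by lia. reflexivity. }
  set (x := fun k => a * INR (Sq true a (k - d)) - INR (Sq true a k)).
  set (y := fun k => INR (Sq true a (k - d))).
  destruct (eventual x y d (K + d)) as [m [Hm Hmk]].
  - intros k Hk. unfold x, y.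
    pose proof (Rec k ltac:(lia)) as E1.
    pose proof (Rec (k - d)%nat ltac:(lia)) as E2.
    replace (S k - d)%nat with (S (k - d)) by lia.
    rewrite E1, E2, !plus_INR. split; ring.
  - intros i Hi. unfold x, y. specialize (HJ i ltac:(lia)).
    destruct (J_spec true a Ha Hs i ltac:(lia)) as [A [B [C D]]].
    unfold cP in B; cbv beta iota in B. replace (Jf true a i) with (i - d)%nat in B by lia.
    pose proof (Sq_pos true a (i - d) ltac:(lia)) as P. apply le_INR in P. simpl in P.
    split; lra.
  - exists (K + d)%nat. split. lia. exists m. split; auto. intros k Hk.
    specialize (Hmk k Hk). unfold x, y in Hmk. specialize (HJ k ltac:(lia)).
    replace (Jf true a k) with (k - d)%nat by lia. lra. Qed.

Lemma gap_false : forall a, 1 <= a -> exists e, 0 < e /\ forall k, (1 <= k)%nat ->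
  (a + e) * INR (Sq false a (Jf false a k - 1)) <= INR (Sq false a k).
Proof. intros a Ha. assert (Hs : false = true -> 1 < a) by discriminate.
  destruct (gap_late_false a Ha) as [N [HN [e1 [He1 G1]]]].
  destruct (fin_min (fun k e => (1 <= k)%nat -> (a + e) * INR (Sq false a (Jf false a k - 1)) <= INR (Sq false a k))) with (lo := 1%nat) (n := N) as [e2 [He2 G2]].
  - intros k e e' [H1 H2] H3 H4. specialize (H3 H4). pose proof (pos_INR (Sq false a (Jf false a k - 1))). nra.
  - intros k Hk. destruct (gap_early false a Ha Hs k ltac:(lia)) as [e [He G]]. exists e. split; auto.
  - exists (Rmin e1 e2). split. apply Rmin_pos; auto. intros k Hk.
    pose proof (pos_INR (Sq false a (Jf false a k - 1))).
    assert (Rmin e1 e2 <= e1) by apply Rmin_l. assert (Rmin e1 e2 <= e2) by apply Rmin_r.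
    destruct (Compare_dec.le_lt_dec N k).
    + specialize (G1 k l). nra.
    + specialize (G2 k ltac:(lia) Hk). nra.
Qed.

Lemma gap_true : forall a, 1 < a -> exists e, 0 < e /\ forall k, (1 <= k)%nat ->
  INR (Sq true a k) <= (a - e) * INR (Sq true a (Jf true a k)).
Proof. intros a Ha'. assert (Ha : 1 <= a) by lra. assert (Hs : true = true -> 1 < a) by auto.
  destruct (gap_late_true a Ha') as [N [HN [e1 [He1 G1]]]].
  destruct (fin_min (fun k e => (1 <= k)%nat -> INR (Sq true a k) <= (a - e) * INR (Sq true a (Jf true a k)))) with (lo := 1%nat) (n := N) as [e2 [He2 G2]].
  - intros k e e' [H1 H2] H3 H4. specialize (H3 H4). pose proof (pos_INR (Sq true a (Jf true a k))). nra.
  - intros k Hk. destruct (gap_early true a Ha Hs k ltac:(lia)) as [e [He G]]. exists e. split; auto.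
  - exists (Rmin e1 e2). split. apply Rmin_pos; auto. intros k Hk.
    pose proof (pos_INR (Sq true a (Jf true a k))).
    assert (Rmin e1 e2 <= e1) by apply Rmin_l. assert (Rmin e1 e2 <= e2) by apply Rmin_r.
    destruct (Compare_dec.le_lt_dec N k).
    + specialize (G1 k l). nra.
    + specialize (G2 k ltac:(lia) Hk). nra.
Qed.

Lemma Plist_gl : forall alpha, 1 <= alpha -> forall n, Plist alpha n = gl false alpha n.
Proof. intros alpha Ha n. induction n. reflexivity.
  destruct n. reflexivity.
  change (Plist alpha (S (S n))) with (let l := Plist alpha (S n) in let pk := last l 0%nat in
     let j := search_j alpha l pk 1 (length l) in l ++ [(pk + nth j l 0)%nat]).
  change (gl false alpha (S (S n))) with (let l := gl false alpha (S n) in let pk := last l 0%nat in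
     let j := srch (fun j => ctest false alpha pk (nth j l 0%nat)) 1 (length l) in l ++ [(pk + nth j l 0)%nat]).
  cbv zeta. rewrite IHn. f_equal. f_equal. f_equal.
  rewrite search_j_srch. rewrite gl_last, gl_len.
  assert (Hs : false = true -> 1 < alpha) by discriminate.
  pose proof (Sq_pos false alpha (S n) ltac:(lia)) as Pn. apply le_INR in Pn. simpl in Pn.
  destruct (srch_spec (fun j => ctest false alpha (Sq false alpha (S n)) (nth j (gl false alpha (S n)) 0%nat)) (S (S n)) 1 (S n)) as [A1 [B1 C1]].
  lia. rewrite gl_nth by lia. apply ctest_iff, (cP_self false alpha Ha Hs), Sq_pos; lia.
  set (r := srch (fun j => ctest false alpha (Sq false alpha (S n)) (nth j (gl false alpha (S n)) 0%nat)) 1 (S (S n))) in *.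
  f_equal. apply srch_eq. lia.
  - destruct r as [|r']. lia. unfold jcond.
    cbv beta in B1. unfold ctest in B1. destruct (Rle_dec _ _) as [Hle|]; [|discriminate].
    idtac.
    match goal with |- context [Rlt_dec ?x ?y] => destruct (Rlt_dec x y) as [|Hn] end; auto. exfalso.
    destruct (Nat.eq_dec r' 0) as [E|E].
    + subst r'. rewrite gl_nth in Hn by lia. rewrite Sq0 in Hn. simpl in Hn. lra.
    + specialize (C1 r' ltac:(lia)). cbv beta in C1. unfold ctest in C1.
      destruct (Rle_dec _ _); [discriminate|]. lra.
  - intros i Hi. destruct i as [|i']. lia. unfold jcond.
    specialize (C1 (S i') Hi). cbv beta in C1. unfold ctest in C1.
    destruct (Rle_dec _ _); [discriminate|].
    match goal with |- context [Rlt_dec ?x ?y] => destruct (Rlt_dec x y) end; auto.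
Qed.

Lemma P_Sq : forall alpha i, 1 <= alpha -> P alpha i = Sq false alpha i.
Proof. intros. unfold P. rewrite Plist_gl by auto. reflexivity. Qed.

Lemma Char : forall beta (Q : nat -> nat), 1 <= beta -> Q 0%nat = 0%nat -> Q 1%nat = 1%nat ->
  (forall k, (1 <= k)%nat -> exists j, (1 <= j <= k)%nat /\ beta * INR (Q (j - 1)%nat) < INR (Q k) /\
     INR (Q k) <= beta * INR (Q j) /\ Q (S k) = (Q k + Q j)%nat) ->
  forall i, P beta i = Q i.
Proof. intros beta Q Hb Q0 Q1 HQ.
  assert (Qm1 : forall m, (Q m <= Q (S m))%nat).
  { intros [|m]. rewrite Q0; lia. destruct (HQ (S m) ltac:(lia)) as [j [_ [_ [_ E]]]]. lia. }
  assert (Qm : forall m n, (m <= n)%nat -> (Q m <= Q n)%nat).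
  { intros m n H; induction H; auto. specialize (Qm1 m0); lia. }
  assert (Hs : false = true -> 1 < beta) by discriminate.
  assert (H : forall n i, (i <= n)%nat -> Sq false beta i = Q i).
  { induction n; intros i Hi.
    - replace i with 0%nat by lia. rewrite Q0. reflexivity.
    - destruct (Nat.eq_dec i (S n)); [|apply IHn; lia]. subst i.
      destruct n. rewrite Q1; reflexivity.
      destruct (J_spec false beta Hb Hs (S n) ltac:(lia)) as [A [B [C D]]].
      destruct (HQ (S n) ltac:(lia)) as [j [Hj [H1 [H2 H3]]]].
      rewrite D, H3. rewrite (IHn (S n)) by lia.
      assert (EJ : Jf false beta (S n) = j).
      { unfold cP in B. cbv beta iota in B. rewrite (IHn (S n)), (IHn (Jf false beta (S n))) in B by lia.
        destruct (Compare_dec.lt_eq_lt_dec (Jf false beta (S n)) j) as [[L|L]|L]; auto; exfalso.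
        - pose proof (Qm _ _ (ltac:(lia) : (Jf false beta (S n) <= j - 1)%nat)) as M. apply le_INR in M. nra.
        - apply (C j). lia. unfold cP. cbv beta iota. rewrite (IHn (S n)), (IHn j) by lia. auto. }
      rewrite EJ, (IHn j) by lia. reflexivity. }
  intros i. rewrite P_Sq by auto. apply (H i i). lia. Qed.

Lemma right_const : forall alpha, 1 <= alpha -> exists e, 0 < e /\
  forall beta, alpha <= beta < alpha + e -> forall i, P beta i = P alpha i.
Proof. intros alpha Ha. destruct (gap_false alpha Ha) as [e [He G]]. exists e; split; auto.
  intros beta Hb. assert (Hs : false = true -> 1 < alpha) by discriminate.
  intros i. rewrite (P_Sq alpha i Ha). revert i. apply Char. lra. reflexivity. reflexivity.
  intros k Hk. destruct (J_spec false alpha Ha Hs k Hk) as [A [B [C D]]].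
  exists (Jf false alpha k). split; auto. split; [|split; auto].
  - specialize (G k Hk). pose proof (Sq_pos false alpha k Hk) as Pk. apply le_INR in Pk. simpl in Pk.
    destruct (Nat.eq_dec (Jf false alpha k) 1) as [E1|E1].
    + rewrite E1. simpl (1 - 1)%nat. rewrite Sq0. simpl. lra.
    + pose proof (Sq_pos false alpha (Jf false alpha k - 1) ltac:(lia)) as P1. apply le_INR in P1. simpl in P1. nra.
  - unfold cP in B; cbv beta iota in B. pose proof (pos_INR (Sq false alpha (Jf false alpha k))). nra.
Qed.

Lemma left_const : forall alpha, 1 < alpha -> exists e, 0 < e /\ e <= alpha - 1 /\ exists Q : nat -> nat,
  forall beta, alpha - e < beta < alpha -> forall i, P beta i = Q i.
Proof. intros alpha Ha'. assert (Ha : 1 <= alpha) by lra. assert (Hs : true = true -> 1 < alpha) by auto.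
  destruct (gap_true alpha Ha') as [e0 [He0 G]].
  exists (Rmin e0 (alpha - 1)). split. apply Rmin_pos; lra. split. apply Rmin_r.
  exists (Sq true alpha). intros beta Hb.
  assert (Rmin e0 (alpha - 1) <= e0) by apply Rmin_l. assert (Rmin e0 (alpha - 1) <= alpha - 1) by apply Rmin_r.
  apply Char. lra. reflexivity. reflexivity.
  intros k Hk. destruct (J_spec true alpha Ha Hs k Hk) as [A [B [C D]]].
  exists (Jf true alpha k). split; auto. split; [|split; auto].
  - pose proof (Sq_pos true alpha k Hk) as Pk. apply le_INR in Pk. simpl in Pk.
    destruct (Nat.eq_dec (Jf true alpha k) 1) as [E1|E1].
    + rewrite E1. simpl (1 - 1)%nat. rewrite Sq0. simpl. lra.
    + assert (NC := C (Jf true alpha k - 1)%nat ltac:(lia)). apply (not_cP true alpha Hs) in NC.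
      cbv beta iota in NC.
      pose proof (Sq_pos true alpha (Jf true alpha k - 1) ltac:(lia)) as P1. apply le_INR in P1. simpl in P1. nra.
  - specialize (G k Hk). pose proof (pos_INR (Sq true alpha (Jf true alpha k))). nra.
Qed.

Lemma isolated : forall alpha, exists e, 0 < e /\ forall x, cutoff x -> alpha - e < x < alpha + e -> x = alpha.
Proof. intros alpha.
  destruct (Rlt_or_le alpha 1) as [H1|H1].
  - exists (1 - alpha). split. lra. intros x [Hx _] Hx2. lra.
  - destruct (right_const alpha H1) as [e1 [He1 R1]].
    destruct (Req_dec alpha 1) as [E|E].
    + exists e1. split; auto. intros x [Hx Hc] Hx2.
      destruct (Rtotal_order x alpha) as [L|[L|L]]; auto; [lra|].
      exfalso. apply (Hc alpha). lra. intros i. apply R1. lra.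
    + destruct (left_const alpha ltac:(lra)) as [e2 [He2 [He2' [Q L2]]]].
      exists (Rmin e1 e2). split. apply Rmin_pos; auto.
      assert (Rmin e1 e2 <= e1) by apply Rmin_l. assert (Rmin e1 e2 <= e2) by apply Rmin_r.
      intros x [Hx Hc] Hx2.
      destruct (Rtotal_order x alpha) as [L|[L|L]]; auto; exfalso.
      * apply (Hc ((alpha - e2 + x) / 2)). lra. intros i.
        rewrite (L2 x) by lra. rewrite (L2 ((alpha - e2 + x) / 2)) by lra. reflexivity.
      * apply (Hc alpha). lra. intros i. apply R1. lra.
Qed.

Theorem mainTheorem9 : forall a b : R, a <= b ->
  exists l : list R, forall x : R, a <= x <= b -> cutoff x -> In x l.
Proof. intros a b Hab.
  set (F := fun t => exists l : list R, forall x, a <= x <= t -> cutoff x -> In x l).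
  set (E := fun t => a <= t <= b /\ F t).
  assert (Eb : bound E). { exists b. intros t [[_ H] _]; auto. }
  assert (Ea : E a). { split. lra. exists [a]. intros x Hx _. left; lra. }
  destruct (completeness E Eb (ex_intro _ a Ea)) as [m [Hub Hlub]].
  destruct (isolated m) as [e [He Hiso]].
  assert (Ham : a <= m) by (apply Hub; auto).
  assert (Hmb : m <= b) by (apply Hlub; intros t [[_ H] _]; auto).
  assert (Ht : exists t, E t /\ m - e < t).
  { apply NNPP. intro Hn. assert (m <= m - e). apply Hlub. intros t Et.
    destruct (Rle_or_lt t (m - e)); auto. exfalso; apply Hn; eauto. lra. }
  destruct Ht as [t [[Ht Ft] Htm]]. destruct Ft as [l Hl].
  assert (Htm' : t <= m) by (apply Hub; split; auto; exists l; auto).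
  assert (Fm : forall m', m' <= m + e / 2 -> F m').
  { intros m' Hm'. exists (m :: l). intros x Hx Hc. destruct (Rle_or_lt x t).
    right; apply Hl; auto; lra. left. symmetry. apply Hiso; auto. lra. }
  destruct (Rle_or_lt b (m + e / 2)).
  - apply Fm; auto.
  - assert (E (m + e / 2)). { split. lra. apply Fm; lra. }
    apply Hub in H0. lra.
Qed.
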